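(* Let $X$ be a set, $B=(B,+,0)$ a unitary magma and $(A,k,q,s,p)$ a retraction point from $X$ to $B$. Then for all $x,x'\in X$ and $b,b'\in B$: (a) $k(q(0))=0$ and $q(k(x)+k(q(0)))=x=q(k(q(0))+k(x))$; (b) $q(k(x)+s(b))=q((k(x)+0)+(0+s(b)))=q((k(x)+s(b))+(0+0))=q((0+0)+(k(x)+s(b)))$; (c) $q(s(b)+s(b'))=q(0)$; (d) $q\big((k(x)+s(b))+(k(x')+s(b'))\big)=q\big(k(w)+s(b+b')\big)$, where $u=q(k(x)+s(b))$, $v=q(k(x')+s(b'))$ and $w=q\big((k(u)+s(b))+(k(v)+s(b'))\big)$.
   Context: A unitary magma is a set with a binary operation $+$ and an element $0$ with $b+0=b=0+b$ for all $b$; morphisms preserve $+$ and $0$. Given a set $X$ and a unitary magma $B$, a retraction point from $X$ to $B$ is a tuple $(A,k,q,s,p)$ where $A=(A,+,0)$ is a unitary magma, $k\colon X\to A$ and $q\colon A\to X$ are maps, $s\colon B\to A$ and $p\colon A\to B$ are morphisms of unitary magmas, and $p(s(b))=b$, $q(k(x))=x$, $p(k(x))=0$, $q(s(b))=q(0)$, and $k(q(a))+s(p(a))=a$ for all $x\in X$, $b\in B$, $a\in A$. *)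

(* Defs.v *)
Record UnitaryMagma := {
  um_carrier :> Type;
  um_add : um_carrier -> um_carrier -> um_carrier;
  um_zero : um_carrier;
  um_add0r : forall b, um_add um_zero b = b;
  um_addr0 : forall b, um_add b um_zero = b
}.

Arguments um_add {_} _ _.
Arguments um_zero {_}.

Definition um_morphism (M N : UnitaryMagma) (f : M -> N) : Prop :=
  (forall x y, f (um_add x y) = um_add (f x) (f y)) /\ f um_zero = um_zero.

Definition retraction_point (X : Type) (B A : UnitaryMagma)
  (k : X -> A) (q : A -> X) (s : B -> A) (p : A -> B) : Prop :=
  um_morphism B A s /\ um_morphism A B p /\
  (forall b, p (s b) = b) /\
  (forall x, q (k x) = x) /\
  (forall x, p (k x) = um_zero) /\
  (forall b, q (s b) = q um_zero) /\
  (forall a, um_add (k (q a)) (s (p a)) = a).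

(* Main.v *)
Require Import Defs.

Theorem proposition2p2 (X : Type) (B A : UnitaryMagma)
  (k : X -> A) (q : A -> X) (s : B -> A) (p : A -> B) :
  retraction_point X B A k q s p ->
  forall (x x' : X) (b b' : B),
    (* (a) *)
    (k (q um_zero) = um_zero /\
     q (um_add (k x) (k (q um_zero))) = x /\
     x = q (um_add (k (q um_zero)) (k x))) /\
    (* (b) *)
    (q (um_add (k x) (s b))
       = q (um_add (um_add (k x) um_zero) (um_add um_zero (s b))) /\
     q (um_add (um_add (k x) um_zero) (um_add um_zero (s b)))
       = q (um_add (um_add (k x) (s b)) (um_add um_zero um_zero)) /\
     q (um_add (um_add (k x) (s b)) (um_add um_zero um_zero))
       = q (um_add (um_add um_zero um_zero) (um_add (k x) (s b)))) /\
    (* (c) *)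
    q (um_add (s b) (s b')) = q um_zero /\
    (* (d) *)
    (let u := q (um_add (k x) (s b)) in
     let v := q (um_add (k x') (s b')) in
     let w := q (um_add (um_add (k u) (s b)) (um_add (k v) (s b'))) in
     q (um_add (um_add (k x) (s b)) (um_add (k x') (s b')))
       = q (um_add (k w) (s (um_add b b')))).
Proof.
  intros [[sD s0] [[pD p0] [ps [qk [pk [qs kqsp]]]]]] x x' b b'.
  assert (HA : k (q um_zero) = um_zero).
  { pose proof (kqsp um_zero) as H. rewrite p0, s0, um_addr0 in H. exact H. }
  assert (Hp : forall y c, p (um_add (k y) (s c)) = c).
  { intros y c. rewrite pD, pk, ps, um_add0r. reflexivity. }
  assert (Hd : forall y c, um_add (k y) (s c) = um_add (k (q (um_add (k y) (s c)))) (s c)).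
  { intros y c. pose proof (kqsp (um_add (k y) (s c))) as H.
    rewrite (Hp y c) in H. symmetry. exact H. }
  split; [|split; [|split]].
  - rewrite HA, um_addr0, um_add0r, qk. auto.
  - rewrite !um_addr0, !um_add0r. auto.
  - rewrite <- sD, qs. reflexivity.
  - cbv zeta.
    set (T := um_add (um_add (k (q (um_add (k x) (s b)))) (s b))
                     (um_add (k (q (um_add (k x') (s b')))) (s b'))).
    assert (HT : p T = um_add b b') by (unfold T; rewrite pD, !Hp; reflexivity).
    pose proof (kqsp T) as H. rewrite HT in H. rewrite H.
    unfold T; rewrite <- !Hd. reflexivity.
Qed.
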